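(* Let $k\ge 3$ be an integer and $1/2<q<1$. Let $f:[1/k,1]\to\mathbb R$ be given by $$f(x) = x^q(k-2+x)^{(k-1)q} + (k-1)(1-x)^{2q}(k-2+x)^{(k-2)q}.$$ Then $f$ attains its maximum on $[1/k,1]$ at $x=1/k$ or at $x=1$. *)

(* Defs.v *)
From Stdlib Require Import Reals.
Open Scope R_scope.

(* Real power x^q for x >= 0: 0^q = 0 (q > 0 here), x^q = exp(q ln x) for x > 0. *)
Definition rpow (x q : R) : R :=
  if Rle_dec x 0 then 0 else Rpower x q.

Definition f4p5 (k : nat) (q x : R) : R :=
  rpow x q * rpow (INR k - 2 + x) ((INR k - 1) * q)
  + (INR k - 1) * rpow (1 - x) (2 * q) * rpow (INR k - 2 + x) ((INR k - 2) * q).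

(* Main.v *)
Require Import Defs.
From Stdlib Require Import Reals Lra.
From Coquelicot Require Import Coquelicot.
Open Scope R_scope.

Lemma exp_le' x y : x <= y -> exp x <= exp y.
Proof. intros [H|H]; [left; apply exp_increasing; auto| subst; lra]. Qed.

Lemma rpow_pos z p : 0 < z -> rpow z p = exp (p * ln z).
Proof. intros H. unfold rpow. destruct (Rle_dec z 0); [lra|reflexivity]. Qed.

Lemma locally_pos (z : R) (P : R -> Prop) : 0 < z ->
  (forall t, 0 < t -> P t) -> locally z P.
Proof.
  intros Hz HP. assert (H2 : 0 < z/2) by lra.
  exists (mkposreal _ H2). intros t Ht. apply HP.
  unfold ball in Ht; simpl in Ht. unfold AbsRing_ball, abs, minus, plus, opp in Ht; simpl in Ht.
  apply Rabs_lt_between' in Ht. lra.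
Qed.

Lemma rpow_cont_pos p z : 0 < z -> continuous (fun t => rpow t p) z.
Proof.
  intros Hz. apply (ex_derive_continuous (K:=R_AbsRing) (V:=R_NormedModule) (fun t => rpow t p)). exists (p * / z * exp (p * ln z)).
  apply (is_derive_ext_loc (fun t => exp (p * ln t)) (fun t => rpow t p)).
  { apply (locally_pos z (fun t => exp (p * ln t) = rpow t p)); auto.
    intros t Ht. rewrite rpow_pos; auto. }
  auto_derive; [lra|]. field. lra.
Qed.

Lemma rpow_cont0 p : 1 <= p -> continuous (fun t => rpow t p) 0.
Proof.
  intros Hp. apply continuity_pt_filterlim.
  unfold continuity_pt, continue_in, limit1_in, limit_in. simpl.
  unfold R_dist, D_x, no_cond. intros eps He.
  exists (Rmin eps 1). split. { apply Rmin_pos; lra. }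
  intros t [_ Ht]. unfold rpow at 2. destruct (Rle_dec 0 0); [|lra].
  unfold rpow. destruct (Rle_dec t 0).
  - rewrite Rminus_0_r, Rabs_R0; lra.
  - rewrite Rminus_0_r in *. try rewrite Rminus_0_r.
    assert (Ht1 : t < 1) by (pose proof (Rmin_r eps 1); pose proof (Rle_abs t); lra).
    assert (Ht2 : t < eps) by (pose proof (Rmin_l eps 1); pose proof (Rle_abs t); lra).
    unfold Rpower. rewrite Rabs_pos_eq by (left; apply exp_pos).
    assert (ln t <= 0) by (rewrite <- ln_1; apply ln_le; lra).
    apply Rle_lt_trans with (exp (ln t)).
    + apply exp_le'. nra.
    + rewrite exp_ln; lra.
Qed.
Definition E1 K q x := exp (q*ln x + (K-1)*q*ln (K-2+x)).
Definition E2 K q x := exp (2*q*ln (1-x) + (K-2)*q*ln (K-2+x)).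
Definition FF K q x := E1 K q x + (K-1) * E2 K q x.
Definition dFF K q x := q*(K-2+K*x)/(x*(1-x)*(K-2+x)) *
   (E1 K q x * (1-x) - (K-1)*E2 K q x * x).
Definition psi K q x := (q-1)*ln x + q*ln (K-2+x) + (1-2*q)*ln (1-x) - ln (K-1).
Definition dpsi K q x := ((q*K-1)*x - (1-q)*(K-2)) / (x*(1-x)*(K-2+x)).

Lemma FF_der K q x : 3 <= K -> 0 < x < 1 -> is_derive (FF K q) x (dFF K q x).
Proof.
  intros HK Hx. unfold FF, dFF, E1, E2.
  auto_derive. { repeat split; lra. }
  set (A := exp _). set (B := exp _).
  field. repeat split; lra.
Qed.

Lemma psi_der K q x : 3 <= K -> 0 < x < 1 -> is_derive (psi K q) x (dpsi K q x).
Proof.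
  intros HK Hx. unfold psi, dpsi.
  auto_derive. { repeat split; lra. }
  field. repeat split; lra.
Qed.

Lemma f_cont1 k q : 3 <= INR k -> 1/2 < q < 1 -> continuity_pt (f4p5 k q) 1.
Proof.
  intros HK Hq. apply continuity_pt_filterlim. unfold f4p5.
  set (K := INR k).
  assert (C1 : forall c, continuous (fun t => rpow (K - 2 + t) c) 1).
  { intros c. apply (continuous_comp (fun t => K - 2 + t) (fun t => rpow t c)).
    - apply (continuous_plus (V:=R_NormedModule) (fun _ => K - 2) (fun t => t)); [apply continuous_const|apply continuous_id].
    - apply rpow_cont_pos; unfold K; lra. }
  assert (C2 : continuous (fun t => rpow (1 - t) (2*q)) 1).
  { apply (continuous_comp (fun t => 1 - t) (fun t => rpow t (2*q))).
    - apply (continuous_minus (V:=R_NormedModule) (fun _ => 1) (fun t => t)); [apply continuous_const|apply continuous_id].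
    - replace (1-1) with 0 by ring. apply rpow_cont0; lra. }
  apply (continuous_plus (V:=R_NormedModule) (fun x => rpow x q * rpow (K - 2 + x) ((K - 1) * q))
     (fun x => (K - 1) * rpow (1 - x) (2 * q) * rpow (K - 2 + x) ((K - 2) * q))).
  - apply (continuous_mult (K:=R_AbsRing) (fun x => rpow x q) (fun x => rpow (K - 2 + x) ((K - 1) * q))).
    + apply rpow_cont_pos; lra.
    + apply C1.
  - apply (continuous_mult (K:=R_AbsRing) (fun x => (K - 1) * rpow (1 - x) (2 * q)) (fun x => rpow (K - 2 + x) ((K - 2) * q))).
    + apply (continuous_mult (K:=R_AbsRing) (fun _ => K - 1) (fun x => rpow (1 - x) (2 * q))); [apply continuous_const|apply C2].
    + apply C1.
Qed.

Lemma mono_le (g dg : R -> R) (a b : R) : a <= b ->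
  (forall x, a < x < b -> is_derive g x (dg x)) ->
  (forall x, a <= x <= b -> continuity_pt g x) ->
  (forall x, a < x < b -> 0 <= dg x) -> g a <= g b.
Proof.
  intros Hab Hd Hc Hs.
  destruct (Req_dec a b) as [->|Hne]; [lra|].
  assert (Hlt : a < b) by lra.
  assert (pr1 : forall c, a < c < b -> derivable_pt g c).
  { intros c Pc. exists (dg c). apply is_derive_Reals. auto. }
  destruct (MVT g id a b pr1 (fun c _ => derivable_pt_id c) Hlt Hc
     (fun c _ => derivable_continuous_pt _ _ (derivable_pt_id c))) as [c [P E]].
  rewrite (derive_pt_eq_0 g c (dg c) (pr1 c P)) in E
    by (apply is_derive_Reals; auto).
  rewrite (derive_pt_eq_0 id c 1 (derivable_pt_id c)) in E
    by apply derivable_pt_lim_id.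
  unfold id in E. specialize (Hs c P). nra.
Qed.

Lemma mono_ge (g dg : R -> R) (a b : R) : a <= b ->
  (forall x, a < x < b -> is_derive g x (dg x)) ->
  (forall x, a <= x <= b -> continuity_pt g x) ->
  (forall x, a < x < b -> dg x <= 0) -> g b <= g a.
Proof.
  intros Hab Hd Hc Hs.
  destruct (Req_dec a b) as [->|Hne]; [lra|].
  assert (Hlt : a < b) by lra.
  assert (pr1 : forall c, a < c < b -> derivable_pt g c).
  { intros c Pc. exists (dg c). apply is_derive_Reals. auto. }
  destruct (MVT g id a b pr1 (fun c _ => derivable_pt_id c) Hlt Hc
     (fun c _ => derivable_continuous_pt _ _ (derivable_pt_id c))) as [c [P E]].
  rewrite (derive_pt_eq_0 g c (dg c) (pr1 c P)) in E
    by (apply is_derive_Reals; auto).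
  rewrite (derive_pt_eq_0 id c 1 (derivable_pt_id c)) in E
    by apply derivable_pt_lim_id.
  unfold id in E. specialize (Hs c P).
  assert ((b - a) * dg c <= 0) by (pose proof (Rmult_le_compat_l (b-a) (dg c) 0); lra). lra.
Qed.

Lemma locally_01 (z : R) (P : R -> Prop) : 0 < z < 1 ->
  (forall t, 0 < t < 1 -> P t) -> locally z P.
Proof.
  intros Hz HP. assert (H2 : 0 < Rmin z (1-z) /2).
  { assert (0 < Rmin z (1-z)) by (apply Rmin_glb_lt; lra). lra. }
  exists (mkposreal _ H2). intros t Ht. apply HP.
  unfold ball in Ht; simpl in Ht. unfold AbsRing_ball, abs, minus, plus, opp in Ht; simpl in Ht.
  apply Rabs_lt_between' in Ht. pose proof (Rmin_l z (1-z)). pose proof (Rmin_r z (1-z)). lra.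
Qed.

Lemma f_eq k q x : 3 <= INR k -> 0 < x < 1 -> f4p5 k q x = FF (INR k) q x.
Proof.
  intros HK Hx. unfold f4p5, FF, E1, E2.
  rewrite !rpow_pos by lra. rewrite !exp_plus. ring.
Qed.

Lemma f_der k q x : 3 <= INR k -> 0 < x < 1 ->
  is_derive (f4p5 k q) x (dFF (INR k) q x).
Proof.
  intros HK Hx.
  apply (is_derive_ext_loc (FF (INR k) q) (f4p5 k q)).
  { apply (locally_01 x (fun t => FF (INR k) q t = f4p5 k q t)); auto.
    intros t Ht. rewrite f_eq; auto. }
  apply FF_der; auto.
Qed.

Lemma der_cont (g : R -> R) x l : is_derive g x l -> continuity_pt g x.
Proof.
  intros H. apply continuity_pt_filterlim.
  apply (ex_derive_continuous (K:=R_AbsRing) (V:=R_NormedModule) g). exists l; auto.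
Qed.

Lemma sign_dFF K q c : 3 <= K -> 1/2 < q < 1 -> 0 < c < 1 ->
  (0 <= psi K q c -> 0 <= dFF K q c) /\ (psi K q c <= 0 -> dFF K q c <= 0).
Proof.
  intros HK Hq Hc.
  assert (Hpos : 0 < q*(K-2+K*c)/(c*(1-c)*(K-2+c))).
  { unfold Rdiv. apply Rmult_lt_0_compat; [apply Rmult_lt_0_compat; [lra|]; assert (0 < K*c) by (apply Rmult_lt_0_compat; lra); lra|].
    apply Rinv_0_lt_compat. apply Rmult_lt_0_compat; [|lra]. apply Rmult_lt_0_compat; lra. }
  set (U := q*ln c + (K-1)*q*ln (K-2+c) + ln (1-c)).
  set (V := ln (K-1) + (2*q*ln (1-c) + (K-2)*q*ln (K-2+c)) + ln c).
  assert (EU : E1 K q c * (1-c) = exp U).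
  { unfold U, E1. rewrite (exp_plus _ (ln (1-c))), exp_ln; lra. }
  assert (EV : (K-1) * E2 K q c * c = exp V).
  { unfold V, E2. rewrite (exp_plus _ (ln c)), (exp_plus (ln (K-1))), !exp_ln; lra. }
  assert (Hp : psi K q c = U - V) by (unfold psi, U, V; ring).
  unfold dFF. rewrite EU, EV, Hp. split; intros H.
  - apply Rmult_le_pos; [lra|]. pose proof (exp_le' V U). lra.
  - assert (exp U - exp V <= 0) by (pose proof (exp_le' U V); lra). nra.
Qed.

Lemma psi_a K q : 3 <= K -> psi K q (1/K) = 0.
Proof.
  intros HK. unfold psi.
  replace (K - 2 + 1/K) with ((K-1)*(K-1)/K) by (field; lra).
  replace (1 - 1/K) with ((K-1)/K) by (field; lra).
  rewrite !ln_div by (try apply Rmult_lt_0_compat; lra).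
  rewrite ln_mult by lra. rewrite ln_1. ring.
Qed.

Lemma dpsi_sign K q t : 3 <= K -> 0 < t < 1 ->
  (0 <= (q*K-1)*t - (1-q)*(K-2) -> 0 <= dpsi K q t) /\
  ((q*K-1)*t - (1-q)*(K-2) <= 0 -> dpsi K q t <= 0).
Proof.
  intros HK Ht. unfold dpsi.
  assert (0 < t*(1-t)*(K-2+t)) by (apply Rmult_lt_0_compat; [apply Rmult_lt_0_compat|]; lra).
  pose proof (Rinv_0_lt_compat _ H). unfold Rdiv. split; intros; nra.
Qed.

Theorem lemma4p5 (k : nat) (q : R) :
  (3 <= k)%nat -> 1/2 < q < 1 ->
  (forall x, 1 / INR k <= x <= 1 -> f4p5 k q x <= f4p5 k q (1 / INR k))
  \/ (forall x, 1 / INR k <= x <= 1 -> f4p5 k q x <= f4p5 k q 1).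
Proof.
  intros Hk Hq.
  assert (HK : 3 <= INR k) by (replace 3 with (INR 3) by (simpl; ring); apply le_INR; auto).
  set (K := INR k) in *.
  set (a := 1 / K).
  assert (Ha : 0 < a < 1) by (unfold a; split; [apply Rdiv_lt_0_compat; lra|]; apply (Rmult_lt_reg_r K); [lra|]; unfold Rdiv; rewrite Rmult_assoc, Rinv_l; lra).
  set (P := fun t => (q*K-1)*t - (1-q)*(K-2)).
  assert (Pmono : forall s t, s <= t -> P s <= P t).
  { intros s t Hst. unfold P. assert (0 < q*K - 1) by nra. nra. }
  assert (psi_c : forall t, 0 < t < 1 -> continuity_pt (psi K q) t).
  { intros t Ht. apply der_cont with (dpsi K q t). apply psi_der; auto. }
  assert (key : forall x, a <= x <= 1 -> f4p5 k q x <= f4p5 k q a \/ f4p5 k q x <= f4p5 k q 1).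
  { intros x Hx. destruct (Req_dec x 1) as [->|Hx1]; [right; lra|].
    destruct (Rle_or_lt (psi K q x) 0) as [Hps|Hps].
    - left.
      assert (psi_neg : forall c, a <= c <= x -> psi K q c <= 0).
      { intros c Hc. destruct (Rle_or_lt (P c) 0) as [HPc|HPc].
        + rewrite <- (psi_a K q HK). fold a.
          apply (mono_ge (psi K q) (dpsi K q) a c); try lra.
          * intros t Ht. apply psi_der; lra.
          * intros t Ht. apply psi_c; lra.
          * intros t Ht. apply (dpsi_sign K q t HK ltac:(lra)).
            pose proof (Pmono t c ltac:(lra)). unfold P in *; lra.
        + apply Rle_trans with (psi K q x); auto.
          apply (mono_le (psi K q) (dpsi K q) c x); try lra.
          * intros t Ht. apply psi_der; lra.
          * intros t Ht. apply psi_c; lra.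
          * intros t Ht. apply (dpsi_sign K q t HK ltac:(lra)).
            pose proof (Pmono c t ltac:(lra)). unfold P in *; lra. }
      apply (mono_ge (f4p5 k q) (dFF K q) a x); try lra.
      + intros t Ht. apply f_der; [exact HK|lra].
      + intros t Ht. apply der_cont with (dFF K q t). apply f_der; [exact HK|lra].
      + intros t Ht. apply (sign_dFF K q t HK Hq ltac:(lra)). apply psi_neg; lra.
    - right.
      assert (HPx : 0 <= P x).
      { destruct (Rle_or_lt 0 (P x)) as [h|h]; auto. exfalso.
        assert (psi K q x <= psi K q a).
        { apply (mono_ge (psi K q) (dpsi K q) a x); try lra.
          * intros t Ht. apply psi_der; lra.
          * intros t Ht. apply psi_c; lra.
          * intros t Ht. apply (dpsi_sign K q t HK ltac:(lra)).
            pose proof (Pmono t x ltac:(lra)). unfold P in *; lra. }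
        unfold a in H. rewrite psi_a in H; auto. lra. }
      assert (psi_pos : forall c, x <= c < 1 -> 0 <= psi K q c).
      { intros c Hc. apply Rle_trans with (psi K q x); [lra|].
        apply (mono_le (psi K q) (dpsi K q) x c); try lra.
        * intros t Ht. apply psi_der; lra.
        * intros t Ht. apply psi_c; lra.
        * intros t Ht. apply (dpsi_sign K q t HK ltac:(lra)).
          pose proof (Pmono x t ltac:(lra)). unfold P in *; lra. }
      apply (mono_le (f4p5 k q) (dFF K q) x 1); try lra.
      + intros t Ht. apply f_der; [exact HK|lra].
      + intros t Ht. destruct (Req_dec t 1) as [->|Ht1].
        * apply f_cont1; auto.
        * apply der_cont with (dFF K q t). apply f_der; [exact HK|lra].
      + intros t Ht. apply (sign_dFF K q t HK Hq ltac:(lra)). apply psi_pos; lra. }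
  destruct (Rle_or_lt (f4p5 k q a) (f4p5 k q 1)) as [H|H].
  - right. intros x Hx. destruct (key x Hx); lra.
  - left. intros x Hx. destruct (key x Hx); lra.
Qed.
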